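(* Let $\kappa$ be an uncountable regular cardinal and let $\mathcal{I}$ be a $\kappa$-complete proper ideal on $\kappa$ containing every bounded subset of $\kappa$. Then $\mathcal{I}$ has the approximation property if and only if there is a partition $\{C_\alpha:\alpha<\kappa\}$ of $\kappa$ such that, setting $D_\alpha=\bigcup_{\beta\le\alpha}C_\beta$, the family $\{D_\alpha:\alpha<\kappa\}$ is a basis for $\mathcal{I}$.
   Context: A basis for $\mathcal{I}$ is a family $\mathcal{B}\subseteq\mathcal{I}$ such that every $D\in\mathcal{I}$ is contained in some member of $\mathcal{B}$. $\mathcal{I}$ has the approximation property if there is a sequence $\langle B_\alpha:\alpha<\kappa\rangle$ of members of $\mathcal{I}$ which is strictly increasing ($B_\alpha\subsetneq B_\beta$ for $\alpha<\beta$) and continuous ($B_\alpha=\bigcup_{\beta<\alpha}B_\beta$ for limit $\alpha$), with $B_0=\emptyset$, and such that for every $B\in\mathcal{I}$ there is $\alpha<\kappa$ with $B\subsetneq B_\alpha$. *)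

(* Defs.v *)
(* The cardinal kappa is modelled (up to order isomorphism) as a type K
   equipped with a strict well-order [lt] whose order type is an initial
   ordinal (a cardinal). *)
From Stdlib Require Import Classical.

Definition set (T : Type) := T -> Prop.

Definition injective {A B : Type} (f : A -> B) : Prop :=
  forall x y, f x = f y -> x = y.

Definition card_le (A B : Type) : Prop := exists f : A -> B, injective f.
Definition card_lt (A B : Type) : Prop := card_le A B /\ ~ card_le B A.

Definition strict_well_order {K : Type} (lt : K -> K -> Prop) : Prop :=
  (forall a, ~ lt a a) /\
  (forall a b c, lt a b -> lt b c -> lt a c) /\
  (forall a b, lt a b \/ a = b \/ lt b a) /\
  well_founded lt.

Definition le_of {K : Type} (lt : K -> K -> Prop) (a b : K) : Prop :=
  lt a b \/ a = b.

Definition segment {K : Type} (lt : K -> K -> Prop) (a : K) : Type :=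
  { b : K | lt b a }.

Definition is_cardinal_order {K : Type} (lt : K -> K -> Prop) : Prop :=
  strict_well_order lt /\ forall a : K, card_lt (segment lt a) K.

Definition uncountable (K : Type) : Prop := ~ card_le K nat.

Definition bounded {K : Type} (lt : K -> K -> Prop) (X : set K) : Prop :=
  exists a, forall x, X x -> lt x a.

Definition unbounded {K : Type} (lt : K -> K -> Prop) (X : set K) : Prop :=
  forall a, exists x, X x /\ le_of lt a x.

Definition regular {K : Type} (lt : K -> K -> Prop) : Prop :=
  forall X : set K, unbounded lt X -> card_le K { x : K | X x }.

Definition is_zero {K : Type} (lt : K -> K -> Prop) (a : K) : Prop :=
  forall b, ~ lt b a.

Definition is_limit {K : Type} (lt : K -> K -> Prop) (a : K) : Prop :=
  (exists b, lt b a) /\ (forall b, lt b a -> exists c, lt b c /\ lt c a).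

Definition subset {K : Type} (X Y : set K) : Prop := forall x, X x -> Y x.
Definition psubset {K : Type} (X Y : set K) : Prop :=
  subset X Y /\ exists y, Y y /\ ~ X y.
Definition set_eq {K : Type} (X Y : set K) : Prop := forall x, X x <-> Y x.

Definition is_ideal {K : Type} (I : set (set K)) : Prop :=
  I (fun _ => False) /\
  (forall X Y, I Y -> subset X Y -> I X) /\
  (forall X Y, I X -> I Y -> I (fun x => X x \/ Y x)).

Definition proper_ideal {K : Type} (I : set (set K)) : Prop :=
  is_ideal I /\ ~ I (fun _ => True).

Definition kappa_complete {K : Type} (I : set (set K)) : Prop :=
  forall (J : Type) (F : J -> set K),
    card_lt J K -> (forall j, I (F j)) -> I (fun x => exists j, F j x).

Definition contains_bounded {K : Type} (lt : K -> K -> Prop) (I : set (set K)) : Prop :=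
  forall X, bounded lt X -> I X.

Definition is_basis {K : Type} {J : Type} (I : set (set K)) (B : J -> set K) : Prop :=
  (forall j, I (B j)) /\ (forall D, I D -> exists j, subset D (B j)).

Definition approximation_property {K : Type} (lt : K -> K -> Prop)
    (I : set (set K)) : Prop :=
  exists B : K -> set K,
    (forall a, I (B a)) /\
    (forall a b, lt a b -> psubset (B a) (B b)) /\
    (forall a, is_limit lt a -> set_eq (B a) (fun x => exists b, lt b a /\ B b x)) /\
    (forall a, is_zero lt a -> set_eq (B a) (fun _ => False)) /\
    (forall X, I X -> exists a, psubset X (B a)).

Definition is_partition {K : Type} (C : K -> set K) : Prop :=
  (forall a, exists x, C a x) /\
  (forall a b x, C a x -> C b x -> a = b) /\
  (forall x, exists a, C a x).

Definition cumulative {K : Type} (lt : K -> K -> Prop) (C : K -> set K) (a : K) : set K :=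
  fun x => exists b, le_of lt b a /\ C b x.

(* Main.v *)
Require Import Defs.
From Stdlib Require Import Classical.

Lemma wf_min {K : Type} (lt : K -> K -> Prop) (Hwf : well_founded lt)
  (P : K -> Prop) x : P x -> exists m, P m /\ forall y, lt y m -> ~ P y.
Proof.
  induction x as [x IH] using (well_founded_ind Hwf). intros Px.
  destruct (classic (exists y, lt y x /\ P y)) as [[y [Hy Py]]|N].
  - exact (IH y Hy Py).
  - exists x; split; auto. intros y Hy Py; apply N; eauto.
Qed.

Lemma no_max {K : Type} (lt : K -> K -> Prop) (Hso : strict_well_order lt)
  (Hunc : uncountable K) (Hreg : regular lt) : forall a, exists b, lt a b.
Proof.
  destruct Hso as [Hirr [Htr [Htri Hwf]]].
  intros a. apply NNPP; intro N.
  assert (U : unbounded lt (fun x => x = a)).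
  { intros c. exists a. split; auto. destruct (Htri c a) as [h|[h|h]].
    - left; auto.
    - right; auto.
    - exfalso; apply N; eauto. }
  destruct (Hreg _ U) as [f Hf].
  apply Hunc. exists (fun _ => 0). intros x y _. apply Hf.
  generalize (f x) (f y). intros [u pu] [v pv].
  assert (E : u = v) by congruence. destruct E.
  rewrite (proof_irrelevance _ pu pv). reflexivity.
Qed.

Theorem lemma2p2 (K : Type) (lt : K -> K -> Prop)
  (Hcard : is_cardinal_order lt) (Hunc : uncountable K) (Hreg : regular lt)
  (I : set (set K)) (HI : proper_ideal I) (Hcomp : kappa_complete I)
  (Hbdd : contains_bounded lt I) :
  approximation_property lt I <->
  exists C : K -> set K, is_partition C /\ is_basis I (cumulative lt C).
Proof.
  destruct Hcard as [Hso _].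
  pose proof (no_max lt Hso Hunc Hreg) as NM.
  destruct Hso as [Hirr [Htr [Htri Hwf]]].
  destruct HI as [[HI0 [Hdown HU]] _].
  split.
  - intros [B [H1 [H2 [H3 [H4 H5]]]]].
    assert (Mono : forall a b, le_of lt a b -> subset (B a) (B b)).
    { intros a b [h|h]. - apply (H2 a b h). - subst; intros x hx; exact hx. }
    set (succ := fun a s => lt a s /\ forall d, lt a d -> ~ lt d s).
    assert (Hsucc : forall a, exists s, succ a s).
    { intros a. destruct (NM a) as [b hb].
      destruct (wf_min lt Hwf (lt a) b hb) as [m [hm1 hm2]].
      exists m; split; auto. intros d hd hdm; exact (hm2 d hdm hd). }
    set (C := fun a x => exists s, succ a s /\ B s x /\ ~ B a x).
    assert (Key : forall c x, B c x -> exists b, lt b c /\ C b x).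
    { intros c x hc.
      destruct (wf_min lt Hwf (fun c => B c x) c hc) as [m [hm1 hm2]].
      assert (mc : le_of lt m c).
      { destruct (Htri m c) as [h|[h|h]]; [left; auto|right; auto|].
        exfalso; exact (hm2 c h hc). }
      destruct (classic (exists b, lt b m)) as [Hz|Hz].
      + destruct (classic (is_limit lt m)) as [Hl|Hl].
        * destruct (proj1 (H3 m Hl x) hm1) as [b [hb1 hb2]].
          exfalso; exact (hm2 b hb1 hb2).
        * assert (E : exists b, lt b m /\ ~ exists c, lt b c /\ lt c m).
          { apply NNPP; intro E. apply Hl. split; auto.
            intros b hb. apply NNPP; intro E2. apply E; eauto. }
          destruct E as [b [hb1 hb2]].
          exists b. split.
          { destruct mc as [h|h]; [eauto|subst; auto]. }
          exists m. split; [split; auto|split; auto].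
          intros d hd1 hd2; apply hb2; eauto.
      + exfalso. assert (Z : is_zero lt m) by (intros b hb; apply Hz; eauto).
        exact (proj1 (H4 m Z x) hm1). }
    exists C. split; [split; [|split]|split].
    + intros a. destruct (Hsucc a) as [s hs].
      destruct (H2 a s (proj1 hs)) as [_ [y [hy1 hy2]]].
      exists y, s; auto.
    + assert (A : forall a b x, lt a b -> C a x -> C b x -> False).
      { intros a b x hab [s [[hs1 hs2] [hs3 _]]] [s' [_ [_ hn]]].
        apply hn. apply (Mono s b); auto.
        destruct (Htri s b) as [h|[h|h]]; [left; auto|right; auto|].
        exfalso; exact (hs2 b hab h). }
      intros a b x ha hb. destruct (Htri a b) as [h|[h|h]]; auto;
        exfalso; eauto.
    + intros x. destruct (NM x) as [b hb].
      assert (Ix : I (fun y => y = x)).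
      { apply Hbdd. exists b. intros y hy; subst; auto. }
      destruct (H5 _ Ix) as [a [ha _]].
      destruct (Key a x (ha x eq_refl)) as [c [_ hc]]. eauto.
    + intros a. destruct (Hsucc a) as [s [hs1 hs2]].
      apply (Hdown _ (B s) (H1 s)).
      intros x [b [hb [s' [[hs'1 hs'2] [hs'3 _]]]]].
      apply (Mono s' s); auto.
      destruct hb as [hb|hb].
      * left. destruct (Htri s' a) as [h|[h|h]]; [eauto|subst; auto|].
        exfalso; exact (hs'2 a hb h).
      * subst b. destruct (Htri s' s) as [h|[h|h]]; [left; auto|right; auto|].
        exfalso; exact (hs'2 s hs1 h).
    + intros X HX. destruct (H5 X HX) as [a [ha _]].
      exists a. intros x hx.
      destruct (Key a x (ha x hx)) as [b [hb1 hb2]].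
      exists b. split; auto. left; auto.
  - intros [C [[Cne [Cdis Ccov]] [D1 D2]]].
    exists (fun a x => exists b, lt b a /\ C b x).
    split; [|split; [|split; [|split]]].
    + intros a. apply (Hdown _ _ (D1 a)).
      intros x [b [hb hc]]. exists b; split; auto. left; auto.
    + intros a b hab. split.
      * intros x [d [hd hc]]. eauto.
      * destruct (Cne a) as [y hy]. exists y. split; eauto.
        intros [d [hd hc]]. rewrite (Cdis d a y hc hy) in hd. exact (Hirr a hd).
    + intros a [_ Hl] x. split.
      * intros [d [hd hc]]. destruct (Hl d hd) as [b [hb1 hb2]]. eauto.
      * intros [b [hb [d [hd hc]]]]. eauto.
    + intros a Z x. split; [|tauto]. intros [b [hb _]]. exact (Z b hb).
    + intros X HX. destruct (D2 X HX) as [j hj].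
      destruct (NM j) as [j1 h1]. destruct (NM j1) as [j2 h2].
      exists j2. split.
      * intros x hx. destruct (hj x hx) as [b [hb hc]].
        exists b. split; auto. destruct hb as [hb|hb]; [eauto|subst; eauto].
      * destruct (Cne j1) as [y hy]. exists y. split; [eauto|].
        intros hx. destruct (hj y hx) as [b [hb hc]].
        rewrite (Cdis b j1 y hc hy) in hb.
        destruct hb as [hb|hb].
        { exact (Hirr j (Htr _ _ _ h1 hb)). }
        { subst; exact (Hirr _ h1). }
Qed.
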